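(* Consider the problem $\min_{x\in X}\{\psi(x):=f(x)+h(x)\}$ with the setting, inexact oracle, prox setup and Algorithm AGM described in the context. Assume $f$ is equipped with an inexact first-order oracle with uncontrolled error $\delta_u$ and function $L(\cdot)$, and that for any constants $c_1,c_2>0$ there exists an integer $i\ge 0$ such that $2^i c_1\ge L\!\left(\frac{c_2}{c_1 2^i}\right)$. Assume also there exists $\psi^*>-\infty$ with $\psi(x)\ge\psi^*$ for all $x\in X$. Then, after $N$ iterations of Algorithm AGM (i.e. for iterates $x_0,\dots,x_N$ and accepted constants $M_0,\dots,M_{N-1}$), with $K\in\{0,\dots,N-1\}$ an index minimizing $\|M_k(x_k-x_{k+1})\|_{\mathcal{E}}$ over $k\in\{0,\dots,N-1\}$, it holds that $$\|M_K(x_K-x_{K+1})\|_{\mathcal{E}}^2\le\Big(\sum_{k=0}^{N-1}\frac{1}{2M_k}\Big)^{-1}\big(\psi(x_0)-\psi^*+N(4\delta_u+\delta_{pu})\big)+\frac{\varepsilon}{2}.$$ Moreover, the total number of checks of the acceptance inequality (over these $N$ iterations) is not more than $2N-1+\log_2\frac{M_{N-1}}{L_0}$.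
   Context: Setting: $\mathcal{E}$ is a finite-dimensional real vector space with norm $\|\cdot\|_{\mathcal{E}}$, dual $\mathcal{E}^*$ with dual norm $\|\cdot\|_{\mathcal{E},*}$; $\langle g,x\rangle$ is the value of $g\in\mathcal{E}^*$ at $x$. $X\subseteq\mathcal{E}$ is closed convex, $h$ is convex on $X$, $f:X\to\mathbb{R}$. Inexact oracle: $f$ is equipped with an inexact first-order oracle on $X$ if there exist $\delta_u>0$ and a function $L:(0,\infty)\to(0,\infty)$ such that at any $x\in X$, for any $\delta_c>0$, one can compute $\tilde f(x,\delta_c,\delta_u)\in\mathbb{R}$ and $\tilde g(x,\delta_c,\delta_u)\in\mathcal{E}^*$ with $|f(x)-\tilde f(x,\delta_c,\delta_u)|\le\delta_c+\delta_u$ and $f(y)-\big(\tilde f(x,\delta_c,\delta_u)+\langle\tilde g(x,\delta_c,\delta_u),y-x\rangle\big)\le\frac{L(\delta_c)}{2}\|x-y\|_{\mathcal{E}}^2+\delta_c+\delta_u$ for all $y\in X$. Prox setup: $d$ is continuous and convex on $X$, admits a selection of subgradients $d'(x)$ continuous on $X^0$ (the set of $x\in X$ where $d'(x)$ exists), and is $1$-strongly convex: $d(y)-d(x)-\langle d'(x),y-x\rangle\ge\frac12\|y-x\|_{\mathcal{E}}^2$ for $x\in X^0,y\in X$. Bregman divergence: $V[z](x)=d(x)-d(z)-\langle d'(z),x-z\rangle$. Inexact composite prox-mapping: given $\delta_{pu}>0$, $\gamma>0$, $\bar x\in X^0$, $g\in\mathcal{E}^*$, $\delta_{pc}>0$,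 a point $\tilde x\in X^0$ such that there is $p\in\partial h(\tilde x)$ with $\langle g+\frac1\gamma[d'(\tilde x)-d'(\bar x)]+p,u-\tilde x\rangle\ge-\delta_{pc}-\delta_{pu}$ for all $u\in X$ (an approximate minimizer of $\langle g,x\rangle+\frac1\gamma V[\bar x](x)+h(x)$ over $X$). Algorithm AGM: input $\varepsilon>0$, $\delta_u>0$ (oracle uncontrolled error), $\delta_{pu}>0$, $x_0\in X^0$, $L_0>0$. For $k=0,1,\dots$: set $M_k:=L_k/2$; repeat { $M_k:=2M_k$; $\delta_{c,k}=\delta_{pc,k}=\frac{\varepsilon}{20M_k}$; compute $\tilde f_k=\tilde f(x_k,\delta_{c,k},\delta_u)$, $\tilde g_k=\tilde g(x_k,\delta_{c,k},\delta_u)$; compute $w_k$ an inexact composite prox-mapping with $\bar x=x_k$, $g=\tilde g_k$, $\gamma=1/M_k$, errors $\delta_{pc,k},\delta_{pu}$; compute $\tilde f(w_k,\delta_{c,k},\delta_u)$ } until (acceptance inequality) $\tilde f(w_k,\delta_{c,k},\delta_u)\le\tilde f_k+\langle\tilde g_k,w_k-x_k\rangle+\frac{M_k}{2}\|w_k-x_k\|_{\mathcal{E}}^2+\frac{\varepsilon}{10M_k}+2\delta_u$; then set $x_{k+1}=w_k$, $L_{k+1}=M_k/2$. Here $M_k$ denotes its value at acceptance. *)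

(* Defs.v *)
From HB Require Import structures.
From mathcomp Require Import all_boot all_order all_algebra.
From mathcomp Require Import all_classical all_reals all_analysis.
Set Implicit Arguments. Unset Strict Implicit. Unset Printing Implicit Defensive.
Import Order.TTheory GRing.Theory Num.Theory.
Import numFieldNormedType.Exports.
Local Open Scope classical_set_scope.
Local Open Scope ring_scope.

(* The finite-dimensional space E is modelled as 'rV[R]_n; its dual E^* is
   identified with 'rV[R]_n through the canonical pairing [dot g x]. *)
Definition dot (R : realType) (n : nat) (g x : 'rV[R]_n) : R :=
  \sum_(i < n) g ord0 i * x ord0 i.

Definition is_norm (R : realType) (n : nat) (nrm : 'rV[R]_n -> R) : Prop :=
  [/\ forall x, 0 <= nrm x,
      forall x, nrm x = 0 -> x = 0,
      forall (a : R) x, nrm (a *: x) = `|a| * nrm x &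
      forall x y, nrm (x + y) <= nrm x + nrm y].

Definition convex_on (R : realType) (n : nat) (X : set 'rV[R]_n)
  (h : 'rV[R]_n -> R) : Prop :=
  forall x y (t : R), X x -> X y -> 0 <= t <= 1 ->
    h (t *: x + (1 - t) *: y) <= t * h x + (1 - t) * h y.

Definition subgrad (R : realType) (n : nat) (X : set 'rV[R]_n)
  (h : 'rV[R]_n -> R) (x p : 'rV[R]_n) : Prop :=
  forall y, X y -> h x + dot p (y - x) <= h y.

(* inexact first-order oracle (ftil x dc, gtil x dc) = (f~(x,dc,du), g~(x,dc,du)) *)
Definition inexact_oracle (R : realType) (n : nat) (nrm : 'rV[R]_n -> R)
  (X : set 'rV[R]_n) (f : 'rV[R]_n -> R) (du : R) (L : R -> R)
  (ftil : 'rV[R]_n -> R -> R) (gtil : 'rV[R]_n -> R -> 'rV[R]_n) : Prop :=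
  [/\ 0 < du,
      forall dc, 0 < dc -> 0 < L dc &
      forall x dc, X x -> 0 < dc ->
        `|f x - ftil x dc| <= dc + du /\
        forall y, X y ->
          f y - (ftil x dc + dot (gtil x dc) (y - x))
            <= L dc / 2 * nrm (x - y) ^+ 2 + dc + du].

Definition X0_of (R : realType) (n : nat) (X : set 'rV[R]_n)
  (d : 'rV[R]_n -> R) : set 'rV[R]_n :=
  [set x | X x /\ exists g, subgrad X d x g].

Definition prox_setup (R : realType) (n : nat) (nrm : 'rV[R]_n -> R)
  (X : set 'rV[R]_n) (d : 'rV[R]_n -> R) (d' : 'rV[R]_n -> 'rV[R]_n) : Prop :=
  [/\ {within X, continuous d},
      convex_on X d,
      forall x, X0_of X d x -> subgrad X d x (d' x),
      {within X0_of X d, continuous d'} &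
      forall x y, X0_of X d x -> X y ->
        d y - d x - dot (d' x) (y - x) >= 1 / 2 * nrm (y - x) ^+ 2].

Definition bregman (R : realType) (n : nat) (d : 'rV[R]_n -> R)
  (d' : 'rV[R]_n -> 'rV[R]_n) (z x : 'rV[R]_n) : R :=
  d x - d z - dot (d' z) (x - z).

Definition inexact_prox (R : realType) (n : nat) (X : set 'rV[R]_n)
  (h d : 'rV[R]_n -> R) (d' : 'rV[R]_n -> 'rV[R]_n)
  (dpu gamma : R) (xbar g : 'rV[R]_n) (dpc : R) (xt : 'rV[R]_n) : Prop :=
  X0_of X d xt /\
  exists p, subgrad X h xt p /\
    forall u, X u ->
      dot (g + (1 / gamma) *: (d' xt - d' xbar) + p) (u - xt) >= - dpc - dpu.

(* Lk k = L_k, M k = accepted M_k, nchk k = number of checks of the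
   acceptance inequality at iteration k (trials t = 0 .. nchk k - 1, the
   t-th trial using M = Lk k * 2^t), w k t = trial point at trial t. *)
Definition agm_trial_M (R : realType) (Lk : nat -> R) (k t : nat) : R :=
  Lk k * 2 ^+ t.

Definition agm_accept (R : realType) (n : nat) (nrm : 'rV[R]_n -> R)
  (ftil : 'rV[R]_n -> R -> R) (gtil : 'rV[R]_n -> R -> 'rV[R]_n)
  (eps du Mt : R) (xk wk : 'rV[R]_n) : Prop :=
  let dc := eps / (20 * Mt) in
  ftil wk dc <= ftil xk dc + dot (gtil xk dc) (wk - xk)
                + Mt / 2 * nrm (wk - xk) ^+ 2 + eps / (10 * Mt) + 2 * du.

Definition agm_run (R : realType) (n : nat) (nrm : 'rV[R]_n -> R)
  (X : set 'rV[R]_n) (h d : 'rV[R]_n -> R) (d' : 'rV[R]_n -> 'rV[R]_n)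
  (ftil : 'rV[R]_n -> R -> R) (gtil : 'rV[R]_n -> R -> 'rV[R]_n)
  (eps du dpu L0 : R) (x0 : 'rV[R]_n) (N : nat)
  (x : nat -> 'rV[R]_n) (Lk M : nat -> R) (nchk : nat -> nat)
  (w : nat -> nat -> 'rV[R]_n) : Prop :=
  [/\ x 0%N = x0, Lk 0%N = L0 &
      forall k, (k < N)%N ->
      [/\ (0 < nchk k)%N,
          M k = agm_trial_M Lk k (nchk k).-1,
          Lk k.+1 = M k / 2,
          x k.+1 = w k (nchk k).-1 &
          forall t, (t < nchk k)%N ->
            let Mt := agm_trial_M Lk k t in
            let dc := eps / (20 * Mt) in
            inexact_prox X h d d' dpu (Mt^-1) (x k) (gtil (x k) dc) dc (w k t)
            /\ (agm_accept nrm ftil gtil eps du Mt (x k) (w k t)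
                <-> t = (nchk k).-1)]].

Definition log2 (R : realType) (y : R) : R := ln y / ln 2.

(* Main.v *)
Require Import Defs.
From HB Require Import structures.
From mathcomp Require Import all_boot all_order all_algebra.
From mathcomp Require Import all_classical all_reals all_analysis.
From mathcomp Require Import ring lra.
Import Order.TTheory GRing.Theory Num.Theory.
Import numFieldNormedType.Exports.
Local Open Scope classical_set_scope.
Local Open Scope ring_scope.

Section Aux.
Variables (R : realType) (n : nat).
Implicit Types (a b c : 'rV[R]_n).

Lemma dotDl a b c : dot (a + b) c = dot a c + dot b c.
Proof. by rewrite /dot -big_split; apply: eq_bigr => i _; rewrite mxE mulrDl. Qed.
Lemma dotBl a b c : dot (a - b) c = dot a c - dot b c.
Proof.
rewrite dotDl; congr (_ + _); rewrite /dot -sumrN; apply: eq_bigr => i _.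
by rewrite mxE mulNr.
Qed.
Lemma dotZl (s : R) a c : dot (s *: a) c = s * dot a c.
Proof. by rewrite /dot mulr_sumr; apply: eq_bigr => i _; rewrite mxE mulrA. Qed.
Lemma dotNr a c : dot a (- c) = - dot a c.
Proof. by rewrite /dot -sumrN; apply: eq_bigr => i _; rewrite mxE mulrN. Qed.

Lemma nrmN nrm a : is_norm nrm -> nrm (- a) = nrm a.
Proof.
case=> _ _ hZ _; rewrite -scaleN1r hZ normrN normr1 mul1r //.
Qed.
Lemma nrmZ nrm (s : R) a : is_norm nrm -> 0 <= s -> nrm (s *: a) = s * nrm a.
Proof. by case=> _ _ hZ _ hs; rewrite hZ ger0_norm. Qed.
End Aux.

Lemma step (R : realType) (n : nat) (nrm : 'rV[R]_n -> R)
  (X : set 'rV[R]_n) (f h d : 'rV[R]_n -> R) (d' : 'rV[R]_n -> 'rV[R]_n)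
  (du : R) (L : R -> R)
  (ftil : 'rV[R]_n -> R -> R) (gtil : 'rV[R]_n -> R -> 'rV[R]_n)
  (eps dpu Mk : R) (xk wk : 'rV[R]_n) :
  is_norm nrm -> prox_setup nrm X d d' ->
  inexact_oracle nrm X f du L ftil gtil ->
  0 < eps -> 0 < Mk -> X0_of X d xk ->
  inexact_prox X h d d' dpu (Mk^-1) xk (gtil xk (eps / (20 * Mk))) (eps / (20 * Mk)) wk ->
  agm_accept nrm ftil gtil eps du Mk xk wk ->
  X0_of X d wk /\
  nrm (Mk *: (xk - wk)) ^+ 2 / (2 * Mk) <=
    (f xk + h xk) - (f wk + h wk) + eps / (4 * Mk) + (4 * du + dpu).
Proof.
move=> hn [_ _ _ _ sc] [hdu _ orc] he hM hxk [hwk [p [hp hpr]]] hacc.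
split => //.
set dc := eps / (20 * Mk).
have hdc : 0 < dc by rewrite /dc divr_gt0 // mulr_gt0.
set g := gtil xk dc.
have Xxk : X xk by case: hxk.
have Xwk : X wk by case: hwk.
have := hpr xk Xxk.
rewrite div1r invrK !dotDl dotZl dotBl.
have := hp xk Xxk.
have := sc _ _ hxk Xwk.
have := sc _ _ hwk Xxk.
have e1 : wk - xk = - (xk - wk) by rewrite opprB.
rewrite e1 !dotNr nrmN //.
set r := nrm (xk - wk).
move=> s1 s2 s3 s4.
have hdd : dot (d' wk) (xk - wk) - dot (d' xk) (xk - wk) <= - r ^+ 2 by lra.
have hdd' := ler_wpM2l (ltW hM) hdd.
have [q1 _] := orc wk dc Xwk hdc.
have [q2 _] := orc xk dc Xxk hdc.
move: hacc; rewrite /agm_accept -/dc -/g e1 dotNr nrmN // -/r => hacc.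
have hnr : nrm (Mk *: (xk - wk)) = Mk * r by rewrite nrmZ // ltW.
rewrite hnr.
have -> : (Mk * r) ^+ 2 / (2 * Mk) = Mk * r ^+ 2 / 2.
  by field; rewrite gt_eqF.
have -> : eps / (4 * Mk) = 5 * dc.
  by rewrite /dc; field; rewrite gt_eqF.
move: hacc; rewrite (_ : eps / (10 * Mk) = 2 * dc); last by rewrite /dc; field; rewrite gt_eqF.
move=> hacc.
move: q1 q2; rewrite !ler_norml => /andP[q1 q1'] /andP[q2 q2'].
move: hdd'; rewrite mulrN mulrBr => hdd'.
move: s4; rewrite -/dc -/g mulrBr => s4.
lra.
Qed.
Theorem theorem1 (R : realType) (n : nat) (nrm : 'rV[R]_n -> R)
  (X : set 'rV[R]_n) (f h d : 'rV[R]_n -> R) (d' : 'rV[R]_n -> 'rV[R]_n)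
  (du : R) (L : R -> R)
  (ftil : 'rV[R]_n -> R -> R) (gtil : 'rV[R]_n -> R -> 'rV[R]_n)
  (eps dpu L0 psistar : R) (x0 : 'rV[R]_n) (N : nat)
  (x : nat -> 'rV[R]_n) (Lk M : nat -> R) (nchk : nat -> nat)
  (w : nat -> nat -> 'rV[R]_n) (K : nat) :
  is_norm nrm ->
  closed X -> convex_set X ->
  convex_on X h ->
  prox_setup nrm X d d' ->
  inexact_oracle nrm X f du L ftil gtil ->
  (forall c1 c2 : R, 0 < c1 -> 0 < c2 ->
     exists i : nat, 2 ^+ i * c1 >= L (c2 / (c1 * 2 ^+ i))) ->
  (forall y, X y -> f y + h y >= psistar) ->
  0 < eps -> 0 < dpu -> 0 < L0 -> X0_of X d x0 ->
  agm_run nrm X h d d' ftil gtil eps du dpu L0 x0 N x Lk M nchk w ->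
  (0 < N)%N ->
  (K < N)%N ->
  (forall k, (k < N)%N ->
     nrm (M K *: (x K - x K.+1)) <= nrm (M k *: (x k - x k.+1))) ->
  nrm (M K *: (x K - x K.+1)) ^+ 2
    <= (\sum_(k < N) 1 / (2 * M k))^-1
         * (f x0 + h x0 - psistar + N%:R * (4 * du + dpu)) + eps / 2
  /\ (\sum_(k < N) nchk k)%:R <= 2 * N%:R - 1 + log2 (M N.-1 / L0).
Proof.
move=> hn _ _ _ hps horc _ hpsi he hdpu hL0p hx0X [hx0 hL0 hk] hN hK hmin.
have key : forall k, (k < N)%N -> 0 < Lk k -> X0_of X d (x k) ->
  [/\ 0 < M k, 0 < Lk k.+1, X0_of X d (x k.+1) &
   nrm (M k *: (x k - x k.+1)) ^+ 2 / (2 * M k) <=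
    (f (x k) + h (x k)) - (f (x k.+1) + h (x k.+1)) + eps / (4 * M k) + (4 * du + dpu)].
  move=> k hkN hLk hxk.
  have [hc hMk hL hx htr] := hk k hkN.
  have Mpos : 0 < M k by rewrite hMk /agm_trial_M mulr_gt0 // exprn_gt0.
  have ht : ((nchk k).-1 < nchk k)%N by rewrite prednK.
  have := htr _ ht; rewrite /= -hMk -hx => -[hpx hacc].
  have [h1 h2] := @step _ _ _ _ _ _ _ _ _ _ _ _ _ _ _ _ _ hn hps horc he Mpos hxk hpx (proj2 hacc erefl).
  split => //; rewrite hL divr_gt0 //.
have pos : forall k, (k <= N)%N -> 0 < Lk k /\ X0_of X d (x k).
  elim => [|k IH] hkN; first by rewrite hx0 hL0.
  have [hL hX] := IH (ltnW hkN).
  by have [] := key k hkN hL hX.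
set psi := fun y => f y + h y.
set G := fun k => nrm (M k *: (x k - x k.+1)) ^+ 2.
have tel : forall m, (m <= N)%N -> \sum_(k < m) G k / (2 * M k) <=
   psi x0 - psi (x m) + \sum_(k < m) eps / (4 * M k) + m%:R * (4 * du + dpu).
  elim => [|m IH] hm; first by rewrite !big_ord0 hx0 mul0r subrr !addr0.
  rewrite !big_ord_recr /=.
  have [hL hX] := pos m (ltnW hm).
  have [_ _ _ hs] := key m hm hL hX.
  have := IH (ltnW hm).
  have -> : (m.+1)%:R = m%:R + 1 :> R by rewrite -addn1 natrD.
  rewrite mulrDl mul1r /psi /G /= in hs * => IH'.
  lra.
have Mpos : forall k, (k < N)%N -> 0 < M k.
  move=> k hkN; have [hL hX] := pos k (ltnW hkN).
  by have [] := key k hkN hL hX.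
set S := \sum_(k < N) 1 / (2 * M k).
have Spos : 0 < S.
  rewrite /S; case: N hN Mpos {hK hmin tel pos key hk S} => // N' _ Mpos.
  rewrite big_ord_recl /=.
  have t0 : 0 < 1 / (2 * M (@ord0 N')) by rewrite divr_gt0 // mulr_gt0 // Mpos.
  have t1 : 0 <= \sum_(i < N') 1 / (2 * M (lift ord0 i)).
    apply: sumr_ge0 => i _; rewrite divr_ge0 // ltW // mulr_gt0 // Mpos //.
  lra.
have nrm0 : forall v, 0 <= nrm v by case: hn.
have hGS : G K * S <= \sum_(k < N) G k / (2 * M k).
  rewrite /S mulr_sumr; apply: ler_sum => i _.
  rewrite mulrA mulr1 ler_wpM2r //.
    by rewrite invr_ge0 mulr_ge0 // ltW // Mpos.
  by rewrite /G !expr2 ler_pM // hmin.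
have heS : \sum_(k < N) eps / (4 * M k) = eps / 2 * S.
  rewrite /S mulr_sumr; apply: eq_bigr => i _.
  by field; rewrite gt_eqF // Mpos.
have [_ XN] := pos N (leqnn N).
have psiN : psistar <= psi (x N) by apply: hpsi; case: XN.
have htN := tel N (leqnn N).
rewrite heS in htN.
split.
  set A := f x0 + h x0 - psistar + N%:R * (4 * du + dpu).
  have hA : G K * S <= A + eps / 2 * S by rewrite /A /psi in htN psiN *; lra.
  have -> : nrm (M K *: (x K - x K.+1)) ^+ 2 = G K * S / S.
    by rewrite mulfK // gt_eqF.
  rewrite ler_pdivrMr //.
  have -> : (S^-1 * A + eps / 2) * S = A + eps / 2 * S.
    by field; rewrite gt_eqF.
  exact: hA.
have Lform : forall m, (m <= N)%N ->
   Lk m * 2 ^+ (2 * m) = L0 * 2 ^+ (\sum_(k < m) nchk k).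
  elim => [|m IH] hm; first by rewrite hL0 big_ord0 muln0 expr0 mulr1.
  have [hc hMk hL _ _] := hk m hm.
  rewrite big_ord_recr /= exprD mulrA -IH ?(ltnW hm) // hL hMk /agm_trial_M.
  set c := (nchk m).-1.
  have e : nchk m = c.+1 by rewrite /c prednK.
  rewrite e mulnSr exprD !exprS ?expr0.
  by field.
case: N hN hK hmin hk Lform {tel htN pos key XN psiN heS hGS S Spos Mpos G} => // N' _ _ _ hk Lform.
have [hc hMk hL _ _] := hk N' (ltnSn N').
have hLN := Lform N'.+1 (leqnn _).
set s := (\sum_(k < N'.+1) nchk k)%N in hLN *.
have hM : M N' / L0 = 2 ^+ s.+1 / 2 ^+ (2 * N'.+1).
  have -> : M N' = 2 * Lk N'.+1 by rewrite hL; field.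
  have -> : Lk N'.+1 = L0 * 2 ^+ s / 2 ^+ (2 * N'.+1).
    by rewrite -hLN mulfK // expf_neq0.
  rewrite exprS; field.
  by rewrite expf_neq0 // gt_eqF.
rewrite /= hM /log2 ln_div ?posrE ?exprn_gt0 // !lnXn //.
have l2 : 0 < ln (2 : R) by apply: ln_gt0; lra.
rewrite -[ln 2 *+ s.+1]mulr_natr -[ln 2 *+ (2 * N'.+1)]mulr_natr.
rewrite -mulrBr [ln 2 * _ / _]mulrAC mulfV ?gt_eqF // mul1r.
rewrite -addn1 !natrD natrM /=.
lra.
Qed.
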